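(* Let $\Phi:(X,d^X,\mu,T)\to(Y,d^Y,\nu,S)$ be a Borel factor map of compact model p.-p. systems, and let $\alpha>1$, $\delta>0$ and $\kappa>\kappa'>0$. Then for every $\alpha_1\in[1,\alpha)$ there exist $\kappa_1\in(\kappa',\kappa)$ and $\delta_1\in(0,\delta)$ such that \[\mathrm{BICOV}_{\alpha_1,\kappa_1,\kappa',\delta_1N}\big(X,d^{\mathbf{X}}_{[-N;0)},d^{\mathbf{X}}_{[0;N)},\mu\big)\ \ge\ \mathrm{BICOV}_{\alpha,\kappa,\kappa',\delta N}\big(Y,d^{\mathbf{Y}}_{[-N;0)},d^{\mathbf{Y}}_{[0;N)},\nu\big)\] for all sufficiently large $N$.
   Context: A compact model p.-p. system $(X,d^X,\mu,T)$: $(X,d^X)$ compact metric space, $T$ a homeomorphism, $\mu$ a $T$-invariant Borel probability. For finite $F\subseteq\mathbb{Z}$, $d^{\mathbf{X}}_F(x,x')=\sum_{n\in F}d^X(T^nx,T^nx')$. A Borel factor map is a Borel map $\Phi$ with $\Phi\circ T=S\circ\Phi$ $\mu$-a.e. and $\Phi_*\mu=\nu$ (not necessarily continuous). $B^d_r(x)=\{y:d(x,y)<r\}$, $B^d_r(F)=\bigcup_{x\in F}B^d_r(x)$. For a standard Borel space with totally bounded Borel pseudometrics $d_1,d_2$ and finite measure $\mu$: $\mathrm{bicov}_a((X,d_1,d_2,\mu),\delta)=\min\{|F|:F\subseteq X,\ \mu(B^{d_2}_\delta(B^{d_1}_\delta(F)))>a\}$; for $U\subseteq X$, $(U,d_1,d_2,\mu')$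 means $U$ with restricted pseudometrics (balls taken inside $U$) and unnormalized restriction of $\mu'$. $\mathrm{BICOV}_{\alpha,\kappa,\kappa',\delta}(X,d_1,d_2,\mu)=\min_{\mu'}\max_{U:\mu'(U)\ge\kappa}\mathrm{bicov}_{\kappa'}((U,d_1,d_2,\mu'),\delta)$, minimum over Borel probabilities $\mu'$ with $\|d\mu'/d\mu\|_\infty\le\alpha$, maximum over Borel $U\subseteq X$. *)

(* Defs.v *)
From Stdlib Require Import Reals Lra ZArith List Classical.
Open Scope R_scope.

Record metric_space := MetricSpace {
  ms_car :> Type;
  ms_d : ms_car -> ms_car -> R;
  ms_d_nonneg : forall x y, 0 <= ms_d x y;
  ms_d_refl : forall x, ms_d x x = 0;
  ms_d_sep : forall x y, ms_d x y = 0 -> x = y;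
  ms_d_sym : forall x y, ms_d x y = ms_d y x;
  ms_d_tri : forall x y z, ms_d x z <= ms_d x y + ms_d y z
}.

Definition is_open {X : metric_space} (O : X -> Prop) : Prop :=
  forall x, O x -> exists r, 0 < r /\ forall y, ms_d X x y < r -> O y.

Definition compact_space (X : metric_space) : Prop :=
  forall (I : Type) (O : I -> X -> Prop),
    (forall i, is_open (O i)) -> (forall x, exists i, O i x) ->
    exists l : list I, forall x, exists i, In i l /\ O i x.

Definition continuous_map {X Y : metric_space} (f : X -> Y) : Prop :=
  forall x eps, 0 < eps -> exists dl, 0 < dl /\
    forall y, ms_d X x y < dl -> ms_d Y (f x) (f y) < eps.

Inductive borel {X : metric_space} : (X -> Prop) -> Prop :=
  | borel_open : forall O, is_open O -> borel O
  | borel_compl : forall A, borel A -> borel (fun x => ~ A x)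
  | borel_cunion : forall A : nat -> X -> Prop,
      (forall n, borel (A n)) -> borel (fun x => exists n, A n x)
  | borel_ext : forall A B, borel A -> (forall x, A x <-> B x) -> borel B.

Definition borel_map {X Y : metric_space} (f : X -> Y) : Prop :=
  forall B : Y -> Prop, borel B -> borel (fun x => B (f x)).

(** * Borel probability measures (values on non-Borel sets are irrelevant) *)
Record prob_measure (X : metric_space) := ProbMeasure {
  pm :> (X -> Prop) -> R;
  pm_nonneg : forall A, borel A -> 0 <= pm A;
  pm_total : pm (fun _ => True) = 1;
  pm_sigma_add : forall A : nat -> X -> Prop,
    (forall n, borel (A n)) ->
    (forall n m x, n <> m -> A n x -> A m x -> False) ->
    infinite_sum (fun n => pm (A n)) (pm (fun x => exists n, A n x))
}.
Arguments pm {X} _ _.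

Record cmpp_system := CMPP {
  sys_space : metric_space;
  sys_compact : compact_space sys_space;
  sys_T : sys_space -> sys_space;
  sys_Tinv : sys_space -> sys_space;
  sys_T_cont : continuous_map sys_T;
  sys_Tinv_cont : continuous_map sys_Tinv;
  sys_T_Tinv : forall x, sys_T (sys_Tinv x) = x;
  sys_Tinv_T : forall x, sys_Tinv (sys_T x) = x;
  sys_mu : prob_measure sys_space;
  sys_mu_inv : forall A, borel A -> sys_mu (fun x => A (sys_T x)) = sys_mu A
}.

Definition sys_iter (S : cmpp_system) (n : Z) (x : sys_space S) : sys_space S :=
  match n with
  | Z0 => x
  | Zpos p => Nat.iter (Pos.to_nat p) (sys_T S) x
  | Zneg p => Nat.iter (Pos.to_nat p) (sys_Tinv S) x
  end.

(** d_F with F = [a ; a+len) :  sum_{n in F} d(T^n x, T^n x') *)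
Fixpoint dseg (S : cmpp_system) (a : Z) (len : nat)
  (x y : sys_space S) : R :=
  match len with
  | O => 0
  | S k => dseg S a k x y +
      ms_d (sys_space S) (sys_iter S (a + Z.of_nat k) x) (sys_iter S (a + Z.of_nat k) y)
  end.

Definition borel_factor (SX SY : cmpp_system)
  (Phi : sys_space SX -> sys_space SY) : Prop :=
  borel_map Phi /\
  (exists Z : sys_space SX -> Prop, borel Z /\ sys_mu SX Z = 0 /\
     forall x, ~ Z x -> Phi (sys_T SX x) = sys_T SY (Phi x)) /\
  (forall B, borel B -> sys_mu SX (fun x => B (Phi x)) = sys_mu SY B).

(** The set B^{d2}_delta(B^{d1}_delta(F)) computed inside U. *)
Definition bicov_set {X : Type} (d1 d2 : X -> X -> R) (U : X -> Prop)
  (delta : R) (F : list X) : X -> Prop :=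
  fun y => U y /\ exists z, U z /\ d2 z y < delta /\
                   exists x, In x F /\ d1 x z < delta.

(** bicov_a((U,d1,d2,mu'),delta) >= M  (as an element of nat):
    no F subset of U with |F| < M satisfies mu'(B^{d2}(B^{d1}(F))) > a. *)
Definition bicov_ge {X : metric_space} (d1 d2 : X -> X -> R)
  (mu' : prob_measure X) (U : X -> Prop) (a delta : R) (M : nat) : Prop :=
  forall F : list X, (forall x, In x F -> U x) -> (length F < M)%nat ->
    ~ (pm mu' (bicov_set d1 d2 U delta F) > a).

(** Borel probability mu' with || d mu' / d mu ||_oo <= alpha *)
Definition density_bounded {X : metric_space} (mu mu' : prob_measure X)
  (alpha : R) : Prop :=
  forall A, borel A -> pm mu' A <= alpha * pm mu A.

Definition BICOV_ge {X : metric_space} (d1 d2 : X -> X -> R)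
  (mu : prob_measure X) (alpha kappa kappa' delta : R) (M : nat) : Prop :=
  forall mu' : prob_measure X, density_bounded mu mu' alpha ->
    exists U : X -> Prop, borel U /\ pm mu' U >= kappa /\
      bicov_ge d1 d2 mu' U kappa' delta M.

Definition sysBICOV_ge (S : cmpp_system) (N : nat)
  (alpha kappa kappa' r : R) (M : nat) : Prop :=
  BICOV_ge (dseg S (- Z.of_nat N) N) (dseg S 0 N) (sys_mu S)
    alpha kappa kappa' r M.

(* Main.v *)
Require Import Defs.
From Stdlib Require Import Reals ZArith List Lra Lia Classical.
From Stdlib Require Import FunctionalExtensionality PropExtensionality IndefiniteDescription ClassicalEpsilon.
Open Scope R_scope.

Lemma set_ext {T : Type} (A B : T -> Prop) : (forall x, A x <-> B x) -> A = B.
Proof. intro H; apply functional_extensionality; intro x; apply propositional_extensionality; auto. Qed.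

Section Meas.
Context {X : metric_space} (mu : prob_measure X).

Lemma pm_ext (A B : X -> Prop) : (forall x, A x <-> B x) -> pm mu A = pm mu B.
Proof. intro H; rewrite (set_ext A B H); reflexivity. Qed.

Lemma is_open_ext (A B : X -> Prop) : is_open A -> (forall x, A x <-> B x) -> is_open B.
Proof. intros H E; rewrite <- (set_ext A B E); exact H. Qed.

Lemma open_False : is_open (fun _ : X => False).
Proof. intros x []. Qed.
Lemma open_True : is_open (fun _ : X => True).
Proof. intros x _; exists 1; split; [lra|auto]. Qed.

Lemma borel_False : borel (fun _ : X => False).
Proof. apply borel_open, open_False. Qed.
Lemma borel_True : borel (fun _ : X => True).
Proof. apply borel_open, open_True. Qed.

Lemma borel_or (A B : X -> Prop) : borel A -> borel B -> borel (fun x => A x \/ B x).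
Proof.
  intros HA HB.
  apply borel_ext with (A := fun x => exists n, (match n with O => A | _ => B end) x).
  - apply borel_cunion; intros [|n]; auto.
  - intro x; split.
    + intros [[|n] H]; auto.
    + intros [H|H]; [exists O|exists 1%nat]; auto.
Qed.

Lemma borel_not (A : X -> Prop) : borel A -> borel (fun x => ~ A x).
Proof. apply borel_compl. Qed.

Lemma borel_and (A B : X -> Prop) : borel A -> borel B -> borel (fun x => A x /\ B x).
Proof.
  intros HA HB.
  apply borel_ext with (A := fun x => ~ (~ A x \/ ~ B x)).
  - apply borel_compl, borel_or; apply borel_compl; auto.
  - intro x; tauto.
Qed.

Lemma borel_ex_lt (P : nat -> X -> Prop) (n : nat) :
  (forall k, borel (P k)) -> borel (fun x => exists k, (k < n)%nat /\ P k x).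
Proof.
  intro H.
  apply borel_cunion with (A := fun k x => (k < n)%nat /\ P k x).
  intro k; destruct (Nat.lt_ge_cases k n) as [h|h].
  - apply borel_ext with (A := P k); [auto| intro; split; [auto|tauto]].
  - apply borel_ext with (A := fun _ => False); [apply borel_False| intro; split; [tauto|lia]].
Qed.

Lemma borel_ex (P : nat -> X -> Prop) :
  (forall k, borel (P k)) -> borel (fun x => exists k, P k x).
Proof. apply borel_cunion. Qed.

Lemma borel_all_lt (P : nat -> X -> Prop) (n : nat) :
  (forall k, borel (P k)) -> borel (fun x => forall k, (k < n)%nat -> P k x).
Proof.
  intro H.
  apply borel_ext with (A := fun x => ~ exists k, (k < n)%nat /\ ~ P k x).
  - apply borel_compl, borel_ex_lt; intro; apply borel_compl; auto.
  - intro x; split.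
    + intros h k hk; apply NNPP; intro; apply h; eauto.
    + intros h [k [hk hp]]; auto.
Qed.

Lemma pm_empty : pm mu (fun _ => False) = 0.
Proof.
  pose proof (pm_sigma_add X mu (fun _ _ => False) (fun _ => borel_False)
      (fun _ _ _ _ h _ => h)) as H. cbv beta in H.
  rewrite (pm_ext (fun x => exists _ : nat, False) (fun _ => False)) in H
    by (intro; split; [intros [_ h]; exact h| tauto]).
  set (c := pm mu (fun _ => False)) in *.
  destruct (Req_dec c 0) as [e|e]; auto.
  destruct (H (Rabs c)) as [N HN]; [apply Rabs_pos_lt; auto|].
  specialize (HN (S N) ltac:(lia)). rewrite sum_cte in HN. unfold Rdist in HN.
  replace (c * INR (S (S N)) - c) with (c * INR (S N)) in HN by (rewrite !S_INR; ring).
  rewrite Rabs_mult, (Rabs_right (INR (S N))) in HN by (apply Rle_ge, pos_INR).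
  assert (1 <= INR (S N)) by (rewrite S_INR; pose proof (pos_INR N); lra).
  pose proof (Rabs_pos c). nra.
Qed.

Lemma pm_add (A B : X -> Prop) : borel A -> borel B -> (forall x, A x -> B x -> False) ->
  pm mu (fun x => A x \/ B x) = pm mu A + pm mu B.
Proof.
  intros HA HB D.
  set (s := fun n : nat => match n with O => A | 1%nat => B | _ => fun _ : X => False end).
  assert (Hs : forall n, borel (s n)) by (intros [|[|n]]; simpl; auto using borel_False).
  assert (Hd : forall n m x, n <> m -> s n x -> s m x -> False).
  { intros [|[|n]] [|[|m]] x hnm; simpl; try tauto; try lia; intros; eauto. }
  pose proof (pm_sigma_add X mu s Hs Hd) as H.
  rewrite (pm_ext (fun x => exists n, s n x) (fun x => A x \/ B x)) in H.
  2:{ intro x; split.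
      - intros [[|[|n]] h]; simpl in h; tauto.
      - intros [h|h]; [exists O|exists 1%nat]; exact h. }
  apply (uniqueness_sum _ _ _ H).
  intros eps Heps; exists 1%nat; intros n hn.
  assert (E : forall k, sum_f_R0 (fun n => pm mu (s n)) (S k) = pm mu A + pm mu B).
  { induction k; simpl; [reflexivity|]. simpl in IHk. rewrite IHk, pm_empty; ring. }
  destruct n; [lia|]. rewrite E. unfold Rdist. rewrite Rminus_diag, Rabs_R0; lra.
Qed.

Lemma pm_nn (A : X -> Prop) : borel A -> 0 <= pm mu A.
Proof. apply pm_nonneg. Qed.

Lemma pm_mono (A B : X -> Prop) : borel A -> borel B -> (forall x, A x -> B x) ->
  pm mu A <= pm mu B.
Proof.
  intros HA HB S.
  rewrite (pm_ext B (fun x => A x \/ (B x /\ ~ A x))) by (intro x; split; [tauto|intros [h|h]; auto; tauto]).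
  rewrite pm_add; auto. 2: apply borel_and; auto; apply borel_compl; auto.
  2: tauto.
  pose proof (pm_nn (fun x => B x /\ ~ A x) ltac:(apply borel_and; auto; apply borel_compl; auto)). lra.
Qed.

Lemma pm_diff (A B : X -> Prop) : borel A -> borel B -> (forall x, A x -> B x) ->
  pm mu (fun x => B x /\ ~ A x) = pm mu B - pm mu A.
Proof.
  intros HA HB S.
  assert (E: pm mu B = pm mu (fun x => A x \/ (B x /\ ~ A x))) by (apply pm_ext; intro x; split; [tauto|intros [h|h]; auto; tauto]).
  rewrite E, pm_add; auto. ring. apply borel_and; auto; apply borel_compl; auto. tauto.
Qed.

Lemma pm_sub2 (A B : X -> Prop) : borel A -> borel B ->
  pm mu (fun x => A x \/ B x) <= pm mu A + pm mu B.
Proof.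
  intros HA HB.
  rewrite (pm_ext (fun x => A x \/ B x) (fun x => A x \/ (B x /\ ~ A x))) by (intro x; tauto).
  rewrite pm_add; auto. 2: apply borel_and; auto; apply borel_compl; auto. 2: tauto.
  assert (pm mu (fun x => B x /\ ~ A x) <= pm mu B).
  { apply pm_mono; auto. apply borel_and; auto; apply borel_compl; auto. tauto. }
  lra.
Qed.

Lemma pm_compl (A : X -> Prop) : borel A -> pm mu (fun x => ~ A x) = 1 - pm mu A.
Proof.
  intro HA. rewrite <- (pm_total X mu).
  rewrite (pm_ext (fun _ => True) (fun x => A x \/ ~ A x)) by (intro; tauto).
  rewrite pm_add; auto. ring. apply borel_compl; auto.
Qed.

Lemma pm_le1 (A : X -> Prop) : borel A -> pm mu A <= 1.
Proof. intro HA. pose proof (pm_compl A HA). pose proof (pm_nn _ (borel_compl _ HA)). lra. Qed.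

Fixpoint fsum (f : nat -> R) (n : nat) : R :=
  match n with O => 0 | S k => fsum f k + f k end.

Lemma pm_sub_fin (B : nat -> X -> Prop) (n : nat) : (forall k, borel (B k)) ->
  pm mu (fun x => exists k, (k < n)%nat /\ B k x) <= fsum (fun k => pm mu (B k)) n.
Proof.
  intro HB; induction n; simpl.
  - rewrite (pm_ext _ (fun _ => False)) by (intro; split; [intros [k [h _]]; lia| tauto]).
    rewrite pm_empty; lra.
  - rewrite (pm_ext _ (fun x => (exists k, (k < n)%nat /\ B k x) \/ B n x)).
    + eapply Rle_trans; [apply pm_sub2; auto using borel_ex_lt|]. lra.
    + intro x; split.
      * intros [k [hk h]]. destruct (Nat.eq_dec k n); [subst; auto| left; exists k; split; auto; lia].
      * intros [[k [hk h]]|h]; [exists k; split; auto; lia| exists n; auto].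
Qed.

Lemma pm_add_fin (B : nat -> X -> Prop) (n : nat) : (forall k, borel (B k)) ->
  (forall i j x, i <> j -> B i x -> B j x -> False) ->
  pm mu (fun x => exists k, (k < n)%nat /\ B k x) = fsum (fun k => pm mu (B k)) n.
Proof.
  intros HB Hd; induction n; simpl.
  - rewrite (pm_ext _ (fun _ => False)) by (intro; split; [intros [k [h _]]; lia| tauto]).
    apply pm_empty.
  - rewrite (pm_ext _ (fun x => (exists k, (k < n)%nat /\ B k x) \/ B n x)).
    + rewrite pm_add; auto using borel_ex_lt. rewrite IHn; auto.
      intros x [k [hk h]] h'. apply (Hd k n x); auto; lia.
    + intro x; split.
      * intros [k [hk h]]. destruct (Nat.eq_dec k n); [subst; auto| left; exists k; split; auto; lia].
      * intros [[k [hk h]]|h]; [exists k; split; auto; lia| exists n; auto].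
Qed.

Lemma pm_cont_below (A : nat -> X -> Prop) : (forall n, borel (A n)) ->
  (forall n x, A n x -> A (S n) x) -> forall eps, 0 < eps ->
  exists K, pm mu (fun x => exists n, A n x) <= pm mu (A K) + eps.
Proof.
  intros HA Hinc eps Heps.
  assert (mon : forall n m x, (n <= m)%nat -> A n x -> A m x).
  { intros n m x h; induction h; auto. }
  set (D := fun n : nat => match n with O => A O | S k => fun x => A (S k) x /\ ~ A k x end).
  assert (HD : forall n, borel (D n)).
  { intros [|k]; simpl; auto. apply borel_and; auto; apply borel_compl; auto. }
  assert (Dd : forall n m x, n <> m -> D n x -> D m x -> False).
  { assert (forall n m x, (n < m)%nat -> D n x -> D m x -> False).
    { intros n [|m] x h; [lia|]. unfold D. intros h1 [h2 h3]. apply h3. apply (mon n m); [lia|].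
      destruct n; tauto. }
    intros n m x h; destruct (Nat.lt_total n m) as [h'|[h'|h']]; eauto; try lia.
    }
  pose proof (pm_sigma_add X mu D HD Dd) as H.
  rewrite (pm_ext (fun x => exists n, D n x) (fun x => exists n, A n x)) in H.
  2:{ intro x; split.
      - intros [[|n] h]; simpl in h; [exists O|exists (S n)]; tauto.
      - intros [n h]. induction n; [exists O; exact h|].
        destruct (classic (A n x)) as [h'|h']; auto. exists (S n); simpl; auto. }
  assert (P : forall n, sum_f_R0 (fun k => pm mu (D k)) n = pm mu (A n)).
  { induction n; simpl; auto. rewrite IHn.
    rewrite (pm_ext (A (S n)) (fun x => A n x \/ (A (S n) x /\ ~ A n x))) by (intro x; split; [tauto| intros [h|h]; auto; tauto]).
    rewrite pm_add; auto. apply borel_and; auto; apply borel_compl; auto. tauto. }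
  destruct (H eps Heps) as [N HN]. exists N. specialize (HN N (le_n _)).
  rewrite P in HN. unfold Rdist in HN. apply Rabs_def2 in HN. lra.
Qed.

End Meas.
Section Reg.
Context {X : metric_space} (mu : prob_measure X).

Definition closed (C : X -> Prop) := is_open (fun x => ~ C x).

Lemma borel_closed C : closed C -> borel C.
Proof. intro H. apply borel_ext with (A := fun x => ~ ~ C x); [apply borel_compl, borel_open, H| intro; tauto]. Qed.

Lemma open_and (A B : X -> Prop) : is_open A -> is_open B -> is_open (fun x => A x /\ B x).
Proof.
  intros HA HB x [ha hb]. destruct (HA x ha) as [r1 [h1 H1]]. destruct (HB x hb) as [r2 [h2 H2]].
  exists (Rmin r1 r2); split; [apply Rmin_glb_lt; auto|].
  intros y hy; split; [apply H1|apply H2]; eapply Rlt_le_trans; eauto; [apply Rmin_l|apply Rmin_r].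
Qed.

Lemma open_union {I : Type} (O : I -> X -> Prop) : (forall i, is_open (O i)) -> is_open (fun x => exists i, O i x).
Proof.
  intros H x [i hi]. destruct (H i x hi) as [r [hr Hr]]. exists r; split; auto. intros y hy; exists i; auto.
Qed.

Lemma open_all_lt (O : nat -> X -> Prop) n : (forall k, is_open (O k)) -> is_open (fun x => forall k, (k < n)%nat -> O k x).
Proof.
  intro H; induction n.
  - apply is_open_ext with (A := fun _ => True); [apply open_True| intro; split; auto; intros; lia].
  - apply is_open_ext with (A := fun x => (forall k, (k < n)%nat -> O k x) /\ O n x).
    + apply open_and; auto.
    + intro x; split.
      * intros [h1 h2] k hk. destruct (Nat.eq_dec k n); [subst; auto| apply h1; lia].
      * intro h; split; auto.
Qed.

Lemma closed_ex_lt (C : nat -> X -> Prop) n : (forall k, closed (C k)) -> closed (fun x => exists k, (k < n)%nat /\ C k x).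
Proof.
  intro H. unfold closed. apply is_open_ext with (A := fun x => forall k, (k < n)%nat -> ~ C k x).
  - apply open_all_lt; auto.
  - intro x; split; [intros h [k [hk hc]]; eapply h; eauto| intros h k hk hc; apply h; eauto].
Qed.

Definition reg (A : X -> Prop) := forall eps, 0 < eps -> exists C O : X -> Prop,
  closed C /\ is_open O /\ (forall x, C x -> A x) /\ (forall x, A x -> O x) /\
  pm mu (fun x => O x /\ ~ C x) <= eps.

Lemma geom_sum K : fsum (fun n => (/2) ^ (S n)) K = 1 - (/2) ^ K.
Proof. induction K; cbn [fsum]; [simpl; ring|]. rewrite IHK. simpl. field. Qed.

Lemma reg_open O : is_open O -> reg O.
Proof.
  intros HO eps Heps.
  set (C := fun (k : nat) (x : X) => forall y, ~ O y -> / INR (S k) <= ms_d X x y).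
  assert (Cc : forall k, closed (C k)).
  { intro k. unfold closed. apply is_open_ext with (A := fun x => exists y, ~ O y /\ ms_d X x y < / INR (S k)).
    - intros x [y [hy hd]]. exists (/ INR (S k) - ms_d X x y); split; [lra|].
      intros x' hx'. exists y; split; auto. pose proof (ms_d_tri X x' x y). rewrite (ms_d_sym X x' x) in H. lra.
    - intro x; unfold C; split.
      + intros [y [hy hd]] h. specialize (h y hy). lra.
      + intro h. apply NNPP; intro h'. apply h. intros y hy. apply Rnot_lt_le. intro hl. apply h'. eauto. }
  assert (CO : forall k x, C k x -> O x).
  { intros k x h. apply NNPP; intro h'. specialize (h x h'). rewrite ms_d_refl in h.
    assert (0 < / INR (S k)) by (apply Rinv_0_lt_compat, lt_0_INR; lia). lra. }
  assert (Cinc : forall k x, C k x -> C (S k) x).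
  { intros k x h y hy. specialize (h y hy). eapply Rle_trans; [|exact h].
    apply Rinv_le_contravar; [apply lt_0_INR; lia| apply le_INR; lia]. }
  assert (Cu : forall x, (exists k, C k x) <-> O x).
  { intro x; split; [intros [k h]; eauto|]. intro h. destruct (HO x h) as [r [hr Hr]].
    destruct (archimed_cor1 r hr) as [N [hN hN0]]. exists (pred N). unfold C. replace (S (pred N)) with N by lia.
    intros y hy. apply Rnot_lt_le; intro hl. apply hy, Hr. lra. }
  destruct (pm_cont_below mu C (fun k => borel_closed _ (Cc k)) Cinc eps Heps) as [K HK].
  rewrite (pm_ext mu _ O Cu) in HK.
  exists (C K), O; split; [auto|split; [auto|split;[intros; eapply CO; eauto|split;[auto|]]]].
  rewrite (pm_diff mu (C K) O); auto using borel_closed. lra. apply borel_open; auto. intros; eapply CO; eauto.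
Qed.

Lemma reg_all A : borel A -> reg A.
Proof.
  induction 1 as [O HO|A HA IH|A HA IH|A B HA IH E].
  - apply reg_open; auto.
  - intros eps Heps. destruct (IH eps Heps) as [C [O [hC [hO [h1 [h2 h3]]]]]].
    exists (fun x => ~ O x), (fun x => ~ C x); split; [|split; [|split; [|split]]].
    + unfold closed. apply is_open_ext with (A := O); auto. intro; tauto.
    + exact hC.
    + intros x h h'. apply h, h2, h'.
    + intros x h h'. apply h, h1, h'.
    + rewrite (pm_ext mu _ (fun x => O x /\ ~ C x)); auto. intro; tauto.
  - intros eps Heps.
    assert (Hc : forall n, exists p : (X -> Prop) * (X -> Prop), closed (fst p) /\ is_open (snd p) /\
       (forall x, fst p x -> A n x) /\ (forall x, A n x -> snd p x) /\
       pm mu (fun x => snd p x /\ ~ fst p x) <= eps / 2 * (/2) ^ (S n)).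
    { intro n. destruct (IH n (eps / 2 * (/ 2) ^ (S n))) as [C [O h]].
      { apply Rmult_lt_0_compat; [lra| apply pow_lt; lra]. }
      exists (C, O); exact h. }
    apply functional_choice in Hc. destruct Hc as [f Hf].
    set (Cn := fun n => fst (f n)). set (On := fun n => snd (f n)).
    assert (bC : forall n, borel (Cn n)) by (intro n; apply borel_closed, Hf).
    assert (bO : forall n, borel (On n)) by (intro n; apply borel_open, Hf).
    set (P := fun K x => exists n, (n < K)%nat /\ On n x).
    assert (bP : forall K, borel (P K)) by (intro; apply borel_ex_lt; auto).
    destruct (pm_cont_below mu P bP) with (eps := eps / 2) as [K HK].
    { intros K x [n [hn h]]; exists n; split; auto; lia. } lra.
    rewrite (pm_ext mu _ (fun x => exists n, On n x)) in HK.
    2:{ intro x; split; [intros [K' [n [_ h]]]; eauto| intros [n h]; exists (S n), n; split; auto]. }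
    exists (fun x => exists n, (n < K)%nat /\ Cn n x), (fun x => exists n, On n x); split; [|split; [|split; [|split]]].
    + apply closed_ex_lt; intro; apply Hf.
    + apply open_union; intro; apply Hf.
    + intros x [n [_ h]]; exists n; apply (Hf n); exact h.
    + intros x [n h]; exists n; apply (Hf n); exact h.
    + assert (bU : borel (fun x => exists n, On n x)) by (apply borel_cunion; auto).
      assert (bCK : borel (fun x => exists n, (n < K)%nat /\ Cn n x)) by (apply borel_ex_lt; auto).
      eapply Rle_trans with (pm mu (fun x => (exists n, On n x) /\ ~ P K x) +
                            pm mu (fun x => exists n, (n < K)%nat /\ (On n x /\ ~ Cn n x))).
      * eapply Rle_trans; [| apply pm_sub2].
        -- apply pm_mono.
           ++ apply borel_and; auto. apply borel_compl; auto.
           ++ apply borel_or; [apply borel_and; auto; apply borel_compl; auto|].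
              apply borel_ex_lt; intro; apply borel_and; auto; apply borel_compl; auto.
           ++ intros x [h1 h2]. destruct (classic (P K x)) as [hp|hp]; [right|left; auto].
              destruct hp as [n [hn ho]]. exists n; repeat split; auto. intro hc; apply h2; eauto.
        -- apply borel_and; auto. apply borel_compl; auto.
        -- apply borel_ex_lt; intro; apply borel_and; auto; apply borel_compl; auto.
      * rewrite pm_diff; auto. 2: intros x [n [_ h]]; eauto.
        pose proof (pm_sub_fin mu (fun n x => On n x /\ ~ Cn n x) K
             ltac:(intro; apply borel_and; auto; apply borel_compl; auto)) as HS.
        assert (fsum (fun k => pm mu (fun x => On k x /\ ~ Cn k x)) K <= eps / 2).
        { apply Rle_trans with (fsum (fun n => eps / 2 * (/2) ^ (S n)) K).
          - assert (G : forall K, fsum (fun k => pm mu (fun x => On k x /\ ~ Cn k x)) K <= fsum (fun n => eps / 2 * (/2) ^ (S n)) K).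
            { intro K0; induction K0; cbn [fsum]; [lra|]. pose proof (proj2 (proj2 (proj2 (proj2 (Hf K0))))).
              unfold On, Cn in *; lra. }
            apply G.
          - assert (E : forall K, fsum (fun n => eps / 2 * (/2) ^ (S n)) K = eps / 2 * fsum (fun n => (/2) ^ (S n)) K).
            { intro K0; induction K0; cbn [fsum]; [ring| rewrite IHK0; ring]. }
            rewrite E, geom_sum. pose proof (pow_lt (/2) K ltac:(lra)). nra. }
        lra.
  - intros eps Heps. destruct (IH eps Heps) as [C [O [hC [hO [h1 [h2 h3]]]]]].
    exists C, O; split; [|split; [|split; [|split]]]; auto; intros x h; [apply E; auto| apply h2, E; auto].
Qed.

Lemma inner_closed A : borel A -> forall eps, 0 < eps -> exists C, closed C /\ (forall x, C x -> A x) /\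
  pm mu (fun x => A x /\ ~ C x) <= eps.
Proof.
  intros HA eps Heps. destruct (reg_all A HA eps Heps) as [C [O [hC [hO [h1 [h2 h3]]]]]].
  exists C; split; [|split]; auto. eapply Rle_trans; [|exact h3]. apply pm_mono.
  - apply borel_and; auto. apply borel_compl, borel_closed; auto.
  - apply borel_and; [apply borel_open; auto| apply borel_compl, borel_closed; auto].
  - intros x [a b]; auto.
Qed.

End Reg.
Lemma borel_preimage_cont {X Y : metric_space} (f : X -> Y) : continuous_map f ->
  forall B, borel B -> borel (fun x => B (f x)).
Proof.
  intros Hf B HB; induction HB as [O HO|A HA IH|A HA IH|A B HA IH E].
  - apply borel_open. intros x hx. destruct (HO (f x) hx) as [r [hr Hr]].
    destruct (Hf x r hr) as [dl [hdl Hdl]]. exists dl; split; auto.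
  - apply borel_compl; auto.
  - apply borel_cunion with (A := fun n x => A n (f x)); auto.
  - apply borel_ext with (A := fun x => A (f x)); auto.
Qed.

Lemma open_ball {X : metric_space} (c : X) r : is_open (fun y => ms_d X c y < r).
Proof.
  intros y hy. exists (r - ms_d X c y); split; [lra|]. intros z hz.
  pose proof (ms_d_tri X c y z). lra.
Qed.

Definition lsum {A : Type} (f : A -> R) (l : list A) : R := fold_right (fun a s => f a + s) 0 l.

Lemma lsum_nn {A} (f : A -> R) l : (forall a, 0 <= f a) -> 0 <= lsum f l.
Proof. intro H; induction l; simpl; [lra|]. pose proof (H a); lra. Qed.

Lemma lsum_ge {A} (f : A -> R) l a : (forall a, 0 <= f a) -> In a l -> f a <= lsum f l.
Proof.
  intros H; induction l as [|b l IH]; simpl; [tauto|]. intros [e|h].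
  - subst. pose proof (lsum_nn f l H). lra.
  - pose proof (H b). specialize (IH h). lra.
Qed.

Lemma compact_bounded (Y : metric_space) : compact_space Y ->
  exists D, 0 < D /\ forall y y', ms_d Y y y' <= D.
Proof.
  intro HY. destruct (HY Y (fun c y => ms_d Y c y < 1) (fun c => open_ball c 1)) as [l Hl].
  { intro y; exists y; rewrite ms_d_refl; lra. }
  set (S := lsum (fun a => lsum (fun b => ms_d Y a b) l) l).
  assert (HS : forall a b, In a l -> In b l -> ms_d Y a b <= S).
  { intros a b ha hb. apply Rle_trans with (lsum (fun b => ms_d Y a b) l).
    - apply (lsum_ge (fun b => ms_d Y a b)); auto. intro; apply ms_d_nonneg.
    - apply (lsum_ge (fun a => lsum (fun b => ms_d Y a b) l)); auto. intro; apply lsum_nn; intro; apply ms_d_nonneg. }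
  assert (0 <= S) by (apply lsum_nn; intro; apply lsum_nn; intro; apply ms_d_nonneg).
  exists (2 + S); split; [lra|]. intros y y'.
  destruct (Hl y) as [a [ha da]]. destruct (Hl y') as [b [hb db]].
  pose proof (ms_d_tri Y y a y'). pose proof (ms_d_tri Y a b y'). pose proof (HS a b ha hb).
  rewrite (ms_d_sym Y y a) in *. lra.
Qed.

Section Sep.
Context {X : metric_space}.

Definition minr (l : list R) : R := fold_right Rmin 1 l.
Lemma minr_pos l : (forall r, In r l -> 0 < r) -> 0 < minr l.
Proof. induction l; simpl; intros H; [lra|]. apply Rmin_glb_lt; auto. Qed.
Lemma minr_le l r : In r l -> minr l <= r.
Proof. induction l; simpl; [tauto|]. intros [e|h]; [subst; apply Rmin_l|]. eapply Rle_trans; [apply Rmin_r|auto]. Qed.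

Lemma separation (C : nat -> X -> Prop) n : compact_space X -> (forall k, closed (C k)) ->
  (forall i j x, (i < n)%nat -> (j < n)%nat -> C i x -> C j x -> i = j) ->
  exists eta, 0 < eta /\ forall i j x z, (i < n)%nat -> (j < n)%nat -> C i x -> C j z -> ms_d X x z < eta -> i = j.
Proof.
  intros HX HC Hd.
  assert (S1 : forall x m, exists r, 0 < r /\ forall i, (i < m)%nat -> ~ C i x -> forall y, ms_d X x y < r -> ~ C i y).
  { intros x m; induction m.
    - exists 1; split; [lra| intros; lia].
    - destruct IHm as [r [hr Hr]]. destruct (classic (C m x)) as [hc|hc].
      + exists r; split; auto. intros i hi hn y hy. destruct (Nat.eq_dec i m); [subst; tauto|]. apply Hr; auto; lia.
      + destruct (HC m x hc) as [r' [hr' Hr']]. exists (Rmin r r'); split; [apply Rmin_glb_lt; auto|].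
        intros i hi hn y hy. destruct (Nat.eq_dec i m).
        * subst. apply Hr'. eapply Rlt_le_trans; [exact hy| apply Rmin_r].
        * apply Hr; auto; [lia|]. eapply Rlt_le_trans; [exact hy| apply Rmin_l]. }
  set (I := {p : X * R | 0 < snd p /\ forall i, (i < n)%nat -> ~ C i (fst p) -> forall y, ms_d X (fst p) y < 2 * snd p -> ~ C i y}).
  destruct (HX I (fun p y => ms_d X (fst (proj1_sig p)) y < snd (proj1_sig p))) as [l Hl].
  { intro p. apply open_ball. }
  { intro x. destruct (S1 x n) as [r [hr Hr]].
    assert (P : 0 < snd (x, r / 2) /\ forall i, (i < n)%nat -> ~ C i (fst (x, r/2)) -> forall y, ms_d X (fst (x, r/2)) y < 2 * snd (x, r/2) -> ~ C i y).
    { simpl; split; [lra|]. intros i hi hn y hy. apply (Hr i hi hn). lra. }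
    exists (exist _ (x, r / 2) P). simpl. rewrite ms_d_refl; lra. }
  exists (minr (map (fun p : I => snd (proj1_sig p)) l)); split.
  - apply minr_pos. intros r hr. apply in_map_iff in hr. destruct hr as [p [e _]]. subst. apply (proj2_sig p).
  - intros i j x z hi hj hx hz hd.
    destruct (Hl x) as [p [hp hpx]]. destruct p as [[x0 r0] [hr0 Hp]]. simpl in *.
    assert (hm : minr (map (fun p : I => snd (proj1_sig p)) l) <= r0).
    { apply minr_le. apply in_map_iff. exists (exist _ (x0, r0) (conj hr0 Hp)); auto. }
    assert (ci : C i x0).
    { apply NNPP; intro h. apply (Hp i hi h x); auto. lra. }
    assert (cj : C j x0).
    { apply NNPP; intro h. apply (Hp j hj h z); auto. pose proof (ms_d_tri X x0 x z). lra. }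
    apply (Hd i j x0); auto.
Qed.
End Sep.

Lemma fsum_le_const (f : nat -> R) c n : (forall k, (k < n)%nat -> f k <= c) -> fsum f n <= INR n * c.
Proof.
  induction n; intro H; cbn [fsum]; [simpl; lra|]. rewrite S_INR.
  assert (fsum f n <= INR n * c) by (apply IHn; intros; apply H; lia). pose proof (H n ltac:(lia)). lra.
Qed.

Lemma inhabited_of_prob {X : metric_space} (mu : prob_measure X) : inhabited X.
Proof.
  apply NNPP; intro h.
  pose proof (pm_total X mu). rewrite (pm_ext mu _ (fun _ => False)) in H by (intro x; split; [intros _; apply h; exact (inhabits x)| tauto]).
  rewrite pm_empty in H. lra.
Qed.

Lemma lusin {X Y : metric_space} (mu : prob_measure X) (Phi : X -> Y) :
  compact_space X -> compact_space Y -> borel_map Phi ->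
  forall beta tau, 0 < beta -> 0 < tau -> exists K, borel K /\ pm mu (fun x => ~ K x) <= tau /\
  exists eta, 0 < eta /\ forall x z, K x -> K z -> ms_d X x z < eta -> ms_d Y (Phi x) (Phi z) < beta.
Proof.
  intros HX HY HPhi beta tau hb ht.
  destruct (inhabited_of_prob mu) as [x0].
  destruct (HY Y (fun c y => ms_d Y c y < beta / 2) (fun c => open_ball c _)) as [l Hl].
  { intro y; exists y; rewrite ms_d_refl; lra. }
  set (n := length l). set (c := fun i => nth i l (Phi x0)).
  set (B := fun i x => ms_d Y (c i) (Phi x) < beta / 2).
  assert (bB : forall i, borel (B i)) by (intro i; apply (HPhi (fun y => ms_d Y (c i) y < beta / 2)), borel_open, open_ball).
  set (A := fun i x => B i x /\ forall j, (j < i)%nat -> ~ B j x).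
  assert (bA : forall i, borel (A i)) by (intro i; apply borel_and; auto; apply borel_all_lt; intro; apply borel_compl; auto).
  assert (Amin : forall k x, B k x -> exists i, (i <= k)%nat /\ A i x).
  { intros k x; induction k as [k IH] using lt_wf_ind. intro hk.
    destruct (classic (exists j, (j < k)%nat /\ B j x)) as [[j [hj hb']]|h].
    - destruct (IH j hj hb') as [i [hi ha]]. exists i; split; auto; lia.
    - exists k; split; auto. split; auto. intros j hj hb'; apply h; eauto. }
  assert (Acov : forall x, exists i, (i < n)%nat /\ A i x).
  { intro x. destruct (Hl (Phi x)) as [cc [hc hd]]. destruct (In_nth l cc (Phi x0) hc) as [k [hk e]].
    destruct (Amin k x) as [i [hi ha]]. { unfold B, c; rewrite e; auto. } exists i; split; auto; lia. }
  assert (n0 : (0 < n)%nat). { destruct (Acov x0) as [i [hi _]]; lia. }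
  assert (hn : 0 < INR n) by (apply lt_0_INR; auto).
  assert (Ch : forall i, exists C, closed C /\ (forall x, C x -> A i x) /\ pm mu (fun x => A i x /\ ~ C x) <= tau / INR n).
  { intro i. apply inner_closed; auto. apply Rdiv_lt_0_compat; auto. }
  apply functional_choice in Ch. destruct Ch as [C HC].
  exists (fun x => exists i, (i < n)%nat /\ C i x). split; [|split].
  - apply borel_ex_lt; intro; apply borel_closed, HC.
  - eapply Rle_trans with (pm mu (fun x => exists i, (i < n)%nat /\ (A i x /\ ~ C i x))).
    + apply pm_mono.
      * apply borel_compl, borel_ex_lt; intro; apply borel_closed, HC.
      * apply borel_ex_lt; intro; apply borel_and; auto; apply borel_compl, borel_closed, HC.
      * intros x h. destruct (Acov x) as [i [hi ha]]. exists i; split; [auto|split; [auto|]]. intro hc; apply h; eauto.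
    + eapply Rle_trans; [apply pm_sub_fin; intro; apply borel_and; auto; apply borel_compl, borel_closed, HC|].
      eapply Rle_trans; [apply fsum_le_const with (c := tau / INR n)|]. intros; apply HC.
      right; field; lra.
  - destruct (separation C n HX (fun k => proj1 (HC k))) as [eta [he Heta]].
    { intros i j x hi hj hci hcj. apply (proj1 (proj2 (HC i))) in hci. apply (proj1 (proj2 (HC j))) in hcj.
      destruct (Nat.lt_total i j) as [h|[h|h]]; auto.
      - exfalso. apply (proj2 hcj i h), hci.
      - exfalso. apply (proj2 hci j h), hcj. }
    exists eta; split; auto. intros x z [i [hi hx]] [j [hj hz]] hd.
    pose proof (Heta i j x z hi hj hx hz hd). subst j.
    apply (proj1 (proj2 (HC i))) in hx. apply (proj1 (proj2 (HC i))) in hz.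
    destruct hx as [hx _]. destruct hz as [hz _]. unfold B in hx, hz.
    pose proof (ms_d_tri Y (Phi x) (c i) (Phi z)). rewrite (ms_d_sym Y (Phi x) (c i)) in H. lra.
Qed.
Section Sys.
Variable S : cmpp_system.

Lemma cont_comp (f g : sys_space S -> sys_space S) : continuous_map f -> continuous_map g -> continuous_map (fun x => f (g x)).
Proof.
  intros Hf Hg x eps he. destruct (Hf (g x) eps he) as [d1 [h1 H1]].
  destruct (Hg x d1 h1) as [d2 [h2 H2]]. exists d2; split; auto.
Qed.

Lemma cont_id : continuous_map (fun x : sys_space S => x).
Proof. intros x eps he; exists eps; split; auto. Qed.

Lemma cont_natiter (f : sys_space S -> sys_space S) k : continuous_map f -> continuous_map (Nat.iter k f).
Proof.
  intro Hf; induction k; simpl; [apply cont_id|]. apply (cont_comp f (Nat.iter k f)); auto.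
Qed.

Lemma cont_iter n : continuous_map (sys_iter S n).
Proof.
  destruct n; simpl; [apply cont_id| apply cont_natiter, sys_T_cont| apply cont_natiter, sys_Tinv_cont].
Qed.

Lemma inv_T k : forall B, borel B -> pm (sys_mu S) (fun x => B (Nat.iter k (sys_T S) x)) = pm (sys_mu S) B.
Proof.
  induction k; intros B HB; simpl; auto.
  rewrite (IHk (fun y => B (sys_T S y))). apply sys_mu_inv; auto.
  apply (borel_preimage_cont (sys_T S) (sys_T_cont S)); auto.
Qed.

Lemma inv_Tinv1 B : borel B -> pm (sys_mu S) (fun x => B (sys_Tinv S x)) = pm (sys_mu S) B.
Proof.
  intro HB. set (W := fun x => B (sys_Tinv S x)).
  assert (HW : borel W) by (apply (borel_preimage_cont (sys_Tinv S) (sys_Tinv_cont S)); auto).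
  rewrite <- (sys_mu_inv S W HW). apply pm_ext. intro x; unfold W; rewrite sys_Tinv_T; tauto.
Qed.

Lemma inv_Tinv k : forall B, borel B -> pm (sys_mu S) (fun x => B (Nat.iter k (sys_Tinv S) x)) = pm (sys_mu S) B.
Proof.
  induction k; intros B HB; simpl; auto.
  rewrite (IHk (fun y => B (sys_Tinv S y))). apply inv_Tinv1; auto.
  apply (borel_preimage_cont (sys_Tinv S) (sys_Tinv_cont S)); auto.
Qed.

Lemma inv_iter n B : borel B -> pm (sys_mu S) (fun x => B (sys_iter S n x)) = pm (sys_mu S) B.
Proof. intro HB; destruct n; simpl; auto using inv_T, inv_Tinv. Qed.

Lemma dseg_nn a L x y : 0 <= dseg S a L x y.
Proof. induction L; simpl; [lra|]. pose proof (ms_d_nonneg (sys_space S) (sys_iter S (a + Z.of_nat L) x) (sys_iter S (a + Z.of_nat L) y)). lra. Qed.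

Lemma dseg_tri a L x y z : dseg S a L x z <= dseg S a L x y + dseg S a L y z.
Proof. induction L; simpl; [lra|]. pose proof (ms_d_tri (sys_space S) (sys_iter S (a + Z.of_nat L) x) (sys_iter S (a + Z.of_nat L) y) (sys_iter S (a + Z.of_nat L) z)). lra. Qed.

Lemma dseg_cont a L y eps : 0 < eps -> exists r, 0 < r /\ forall y', ms_d (sys_space S) y y' < r -> dseg S a L y y' < eps.
Proof.
  revert eps; induction L; intros eps he; simpl.
  - exists 1; split; [lra| intros; lra].
  - destruct (IHL (eps / 2) ltac:(lra)) as [r1 [h1 H1]].
    destruct (cont_iter (a + Z.of_nat L) y (eps / 2) ltac:(lra)) as [r2 [h2 H2]].
    exists (Rmin r1 r2); split; [apply Rmin_glb_lt; auto|]. intros y' hy.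
    assert (ms_d (sys_space S) y y' < r1) by (eapply Rlt_le_trans; [exact hy| apply Rmin_l]).
    assert (ms_d (sys_space S) y y' < r2) by (eapply Rlt_le_trans; [exact hy| apply Rmin_r]).
    specialize (H1 y' H). specialize (H2 y' H0). lra.
Qed.

Lemma borel_nbhd a L (U Q : sys_space S -> Prop) r : borel U ->
  borel (fun y => U y /\ exists z, Q z /\ dseg S a L z y < r).
Proof.
  intro HU. apply borel_and; auto. apply borel_open.
  intros y [z [hq hz]]. destruct (dseg_cont a L y (r - dseg S a L z y) ltac:(lra)) as [r' [h' H']].
  exists r'; split; auto. intros y' hy. exists z; split; auto.
  pose proof (dseg_tri a L z y y'). specialize (H' y' hy). lra.
Qed.

End Sys.

Section Count.
Context {X : metric_space} (mu : prob_measure X).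

Fixpoint cntA (A : nat -> X -> Prop) (L : nat) (x : X) : nat :=
  match L with O => O | S k => (cntA A k x + if excluded_middle_informative (A k x) then 1 else 0)%nat end.

Lemma borel_cnt A : (forall j, borel (A j)) -> forall L m, borel (fun x => (m <= cntA A L x)%nat).
Proof.
  intros HA L; induction L; intro m; simpl.
  - destruct m.
    + apply borel_ext with (A := fun _ => True); [apply borel_True| intro; split; auto; lia].
    + apply borel_ext with (A := fun _ => False); [apply borel_False| intro; split; [tauto|lia]].
  - destruct m.
    + apply borel_ext with (A := fun _ => True); [apply borel_True| intro; split; auto; lia].
    + apply borel_ext with (A := fun x => (S m <= cntA A L x)%nat \/ (A L x /\ (m <= cntA A L x)%nat)).
      * apply borel_or; auto. apply borel_and; auto.
      * intro x; destruct (excluded_middle_informative (A L x)) as [a|a]; split.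
        -- intros [h|[_ h]]; lia.
        -- intro h. destruct (le_lt_dec (S m) (cntA A L x)); [left; auto| right; split; [auto|lia]].
        -- intros [h|[h _]]; [lia| tauto].
        -- intro h; left; lia.
Qed.

Lemma fsum_plus f g n : fsum (fun k => f k + g k) n = fsum f n + fsum g n.
Proof. induction n; simpl; [ring| rewrite IHn; ring]. Qed.
Lemma fsum_mono f g n : (forall k, (k < n)%nat -> f k <= g k) -> fsum f n <= fsum g n.
Proof. induction n; simpl; intros H; [lra|]. pose proof (H n ltac:(lia)). assert (fsum f n <= fsum g n) by (apply IHn; intros; apply H; lia). lra. Qed.
Lemma fsum_ge_const (f : nat -> R) c n : (forall k, (k < n)%nat -> c <= f k) -> INR n * c <= fsum f n.
Proof.
  induction n; intro H; cbn [fsum]; [simpl; lra|]. rewrite S_INR.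
  assert (INR n * c <= fsum f n) by (apply IHn; intros; apply H; lia). pose proof (H n ltac:(lia)). lra.
Qed.

Lemma layer A : (forall j, borel (A j)) -> forall L m,
  fsum (fun k => pm mu (fun x => (S k <= cntA A L x)%nat)) m <= fsum (fun j => pm mu (A j)) L.
Proof.
  intros HA L; induction L; intro m.
  - cbn [fsum]. apply Rle_trans with (fsum (fun _ => 0) m).
    + apply fsum_mono; intros k _. simpl. rewrite (pm_ext mu _ (fun _ => False)) by (intro; split; [lia|tauto]).
      rewrite pm_empty; lra.
    + induction m; simpl; lra.
  - cbn [fsum].
    assert (bE : forall k, borel (fun x => A L x /\ cntA A L x = k)).
    { intro k. apply borel_ext with (A := fun x => A L x /\ ((k <= cntA A L x)%nat /\ ~ (S k <= cntA A L x)%nat)).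
      - apply borel_and; auto. apply borel_and; [apply borel_cnt; auto| apply borel_compl, borel_cnt; auto].
      - intro x; split; intros [h1 h2]; split; auto; lia. }
    apply Rle_trans with (fsum (fun k => pm mu (fun x => (S k <= cntA A L x)%nat) + pm mu (fun x => A L x /\ cntA A L x = k)) m).
    + apply fsum_mono; intros k _.
      eapply Rle_trans; [|apply pm_sub2; [apply borel_cnt; auto| auto]].
      apply pm_mono; [apply borel_cnt; auto| apply borel_or; [apply borel_cnt; auto| auto]|].
      intro x. simpl. destruct (excluded_middle_informative (A L x)); intro h; lia || (destruct (Nat.eq_dec (cntA A L x) k); [right; auto| left; lia]).
    + rewrite fsum_plus. pose proof (IHL m).
      assert (fsum (fun k => pm mu (fun x => A L x /\ cntA A L x = k)) m <= pm mu (A L)).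
      { rewrite <- pm_add_fin; auto.
        - apply pm_mono; auto. apply borel_ex_lt; auto. intros x [k [_ [h _]]]; auto.
        - intros i j x hij [_ h1] [_ h2]. lia. }
      lra.
Qed.

Lemma markov A L m : (forall j, borel (A j)) -> (0 < m)%nat ->
  INR m * pm mu (fun x => (m <= cntA A L x)%nat) <= fsum (fun j => pm mu (A j)) L.
Proof.
  intros HA hm. eapply Rle_trans; [|apply (layer A HA L m)].
  apply fsum_ge_const. intros k hk. apply pm_mono; try apply borel_cnt; auto. intros x h; lia.
Qed.
End Count.
Section Eqv.
Variables (SX SY : cmpp_system) (Phi : sys_space SX -> sys_space SY) (Zs : sys_space SX -> Prop).
Hypothesis HZ : forall x, ~ Zs x -> Phi (sys_T SX x) = sys_T SY (Phi x).

Lemma eqv_pos k x : (forall j, (j < k)%nat -> ~ Zs (Nat.iter j (sys_T SX) x)) ->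
  Phi (Nat.iter k (sys_T SX) x) = Nat.iter k (sys_T SY) (Phi x).
Proof.
  induction k; intro H; simpl; auto. rewrite HZ by (apply H; lia). rewrite IHk; auto.
Qed.

Lemma eqv_neg k x : (forall j, (j < k)%nat -> ~ Zs (Nat.iter (S j) (sys_Tinv SX) x)) ->
  Phi (Nat.iter k (sys_Tinv SX) x) = Nat.iter k (sys_Tinv SY) (Phi x).
Proof.
  induction k; intro H; simpl; auto. rewrite <- IHk by (intros; apply H; lia).
  specialize (H k ltac:(lia)). simpl in H. apply HZ in H. rewrite sys_T_Tinv in H.
  rewrite H, sys_Tinv_T. reflexivity.
Qed.

Definition Zbad (N : nat) (x : sys_space SX) : Prop :=
  (exists k, (k < N)%nat /\ Zs (Nat.iter k (sys_T SX) x)) \/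
  (exists k, (k < N)%nat /\ Zs (Nat.iter (S k) (sys_Tinv SX) x)).

Lemma eqv_iter N x : ~ Zbad N x -> forall n, (- Z.of_nat N <= n < Z.of_nat N)%Z ->
  Phi (sys_iter SX n x) = sys_iter SY n (Phi x).
Proof.
  intros H n hn. destruct n as [|p|p]; simpl; auto.
  - apply eqv_pos. intros j hj hz. apply H. left. exists j; split; auto. lia.
  - apply eqv_neg. intros j hj hz. apply H. right. exists j; split; auto. lia.
Qed.

Lemma borel_Zbad N : borel Zs -> borel (Zbad N).
Proof.
  intro HB. apply borel_or; apply borel_ex_lt; intro k.
  - apply (borel_preimage_cont _ (cont_natiter SX _ k (sys_T_cont SX))); auto.
  - apply (borel_preimage_cont _ (cont_natiter SX _ (S k) (sys_Tinv_cont SX))); auto.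
Qed.

Lemma null_Zbad N : borel Zs -> pm (sys_mu SX) Zs = 0 -> pm (sys_mu SX) (Zbad N) <= 0.
Proof.
  intros HB H0.
  assert (b1 : forall k, borel (fun x => Zs (Nat.iter k (sys_T SX) x))) by (intro k; apply (borel_preimage_cont _ (cont_natiter SX _ k (sys_T_cont SX))); auto).
  assert (b2 : forall k, borel (fun x => Zs (Nat.iter (S k) (sys_Tinv SX) x))) by (intro k; apply (borel_preimage_cont _ (cont_natiter SX _ (S k) (sys_Tinv_cont SX))); auto).
  eapply Rle_trans; [apply pm_sub2; apply borel_ex_lt; auto|].
  pose proof (pm_sub_fin (sys_mu SX) _ N b1). pose proof (pm_sub_fin (sys_mu SX) _ N b2).
  assert (fsum (fun k => pm (sys_mu SX) (fun x => Zs (Nat.iter k (sys_T SX) x))) N <= INR N * 0).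
  { apply fsum_le_const. intros k _. rewrite inv_T; auto; lra. }
  assert (fsum (fun k => pm (sys_mu SX) (fun x => Zs (Nat.iter (S k) (sys_Tinv SX) x))) N <= INR N * 0).
  { apply fsum_le_const. intros k _. rewrite inv_Tinv; auto; lra. }
  lra.
Qed.
End Eqv.

Definition cntK (S : cmpp_system) (K : sys_space S -> Prop) (a : Z) (L : nat) (x : sys_space S) : nat :=
  cntA (fun j y => ~ K (sys_iter S (a + Z.of_nat j) y)) L x.

Section Window.
Variables (SX SY : cmpp_system) (Phi : sys_space SX -> sys_space SY) (K : sys_space SX -> Prop).
Variables (eta beta D : R).
Hypotheses (he : 0 < eta) (hb : 0 < beta) (hD : 0 < D).
Hypothesis HD : forall y y', ms_d (sys_space SY) y y' <= D.
Hypothesis HK : forall p q, K p -> K q -> ms_d (sys_space SX) p q < eta -> ms_d (sys_space SY) (Phi p) (Phi q) < beta.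

Lemma pointwise p q : ms_d (sys_space SY) (Phi p) (Phi q) <=
  beta + D * INR (if excluded_middle_informative (~ K p) then 1%nat else 0%nat)
       + D * INR (if excluded_middle_informative (~ K q) then 1%nat else 0%nat)
       + D / eta * ms_d (sys_space SX) p q.
Proof.
  pose proof (HD (Phi p) (Phi q)). pose proof (ms_d_nonneg (sys_space SX) p q).
  assert (0 <= D / eta * ms_d (sys_space SX) p q) by (apply Rmult_le_pos; [apply Rlt_le, Rdiv_lt_0_compat|]; auto).
  destruct (excluded_middle_informative (~ K p)) as [a|a];
  destruct (excluded_middle_informative (~ K q)) as [b|b]; simpl; try lra.
  destruct (Rlt_le_dec (ms_d (sys_space SX) p q) eta) as [h|h].
  - pose proof (HK p q (NNPP _ a) (NNPP _ b) h). lra.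
  - assert (D <= D / eta * ms_d (sys_space SX) p q).
    { unfold Rdiv. rewrite Rmult_assoc. rewrite <- (Rmult_1_r D) at 1. apply Rmult_le_compat_l; [lra|].
      apply (Rmult_le_reg_l eta); auto. rewrite <- Rmult_assoc, Rinv_r; lra. }
    lra.
Qed.

Lemma window a L x z :
  (forall k, (k < L)%nat -> Phi (sys_iter SX (a + Z.of_nat k) x) = sys_iter SY (a + Z.of_nat k) (Phi x)) ->
  (forall k, (k < L)%nat -> Phi (sys_iter SX (a + Z.of_nat k) z) = sys_iter SY (a + Z.of_nat k) (Phi z)) ->
  dseg SY a L (Phi x) (Phi z) <= INR L * beta + D * INR (cntK SX K a L x) + D * INR (cntK SX K a L z)
     + D / eta * dseg SX a L x z.
Proof.
  induction L; intros Hx Hz.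
  - simpl; lra.
  - unfold cntK in *. simpl dseg. simpl cntA. rewrite <- (Hx L), <- (Hz L) by lia.
    rewrite !plus_INR, S_INR.
    pose proof (IHL ltac:(intros; apply Hx; lia) ltac:(intros; apply Hz; lia)).
    pose proof (pointwise (sys_iter SX (a + Z.of_nat L) x) (sys_iter SX (a + Z.of_nat L) z)).
    lra.
Qed.
End Window.
Lemma INR_up_nat r : 0 < r -> exists m : nat, r <= INR m <= r + 1.
Proof.
  intro hr. destruct (archimed r) as [h1 h2].
  assert (0 <= up r)%Z. { apply le_IZR. lra. }
  exists (Z.to_nat (up r)). rewrite INR_IZR_INZ, Z2Nat.id; auto. lra.
Qed.

Theorem mainTheorem3 :
  forall (SX SY : cmpp_system) (Phi : sys_space SX -> sys_space SY),
    borel_factor SX SY Phi ->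
  forall alpha delta kappa kappa' : R,
    1 < alpha -> 0 < delta -> 0 < kappa' -> kappa' < kappa ->
  forall alpha1 : R, 1 <= alpha1 < alpha ->
    exists kappa1 delta1 : R,
      kappa' < kappa1 < kappa /\ 0 < delta1 < delta /\
      exists N0 : nat, forall N : nat, (N0 <= N)%nat ->
        forall M : nat,
          sysBICOV_ge SY N alpha kappa kappa' (delta * INR N) M ->
          sysBICOV_ge SX N alpha1 kappa1 kappa' (delta1 * INR N) M.
Proof.
  intros SX SY Phi [HPhi [[Zs [HZb [HZ0 HZ]]] Hpush]] alpha delta kappa kappa' ha hd hk' hkk alpha1 [ha1 ha1'].
  destruct (compact_bounded _ (sys_compact SY)) as [D [hD HD]].
  set (beta := delta / 4). set (eps := delta / (16 * D)). set (tau := eps * (kappa - kappa') / (8 * alpha1)).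
  assert (heps : 0 < eps) by (unfold eps; apply Rdiv_lt_0_compat; lra).
  assert (htau : 0 < tau) by (unfold tau; apply Rdiv_lt_0_compat; [apply Rmult_lt_0_compat|]; lra).
  destruct (lusin (sys_mu SX) Phi (sys_compact SX) (sys_compact SY) HPhi beta tau ltac:(unfold beta; lra) htau)
    as [K [HKb [HKm [eta [he HK]]]]].
  set (delta1 := Rmin (delta / 2) (eta * delta / (4 * D))).
  assert (hd1 : 0 < delta1) by (apply Rmin_glb_lt; [lra| apply Rdiv_lt_0_compat; [apply Rmult_lt_0_compat|]; lra]).
  assert (hd1' : delta1 <= delta / 2) by apply Rmin_l.
  assert (hd1'' : delta1 <= eta * delta / (4 * D)) by apply Rmin_r.
  exists ((kappa + kappa') / 2), delta1. split; [lra|]. split; [lra|].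
  destruct (archimed_cor1 eps heps) as [N0 [hN0 hN0']].
  exists N0. intros N hN M Hyp.
  assert (hNpos : 0 < INR N) by (apply lt_0_INR; lia).
  assert (hepsN : 1 <= eps * INR N).
  { assert (/ INR N <= / INR N0) by (apply Rinv_le_contravar; [apply lt_0_INR; lia| apply le_INR; lia]).
    assert (/ INR N < eps) by lra.
    apply (Rmult_lt_compat_r (INR N)) in H0; auto. rewrite Rinv_l in H0; lra. }
  destruct (INR_up_nat (eps * INR N) ltac:(lra)) as [m [hm1 hm2]].
  assert (hm0 : (0 < m)%nat) by (apply INR_lt; simpl; lra).
  intros mu' Hmu'.
  set (nu' := ProbMeasure (sys_space SY) (fun B => pm mu' (fun x => B (Phi x)))
     (fun B hB => pm_nonneg _ mu' _ (HPhi B hB)) (pm_total _ mu')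
     (fun A hA hdj => pm_sigma_add _ mu' (fun n x => A n (Phi x)) (fun n => HPhi _ (hA n))
                       (fun n m x h => hdj n m (Phi x) h))).
  assert (Hnu : density_bounded (sys_mu SY) nu' alpha).
  { intros B hB. simpl. rewrite <- (Hpush B hB). pose proof (Hmu' _ (HPhi B hB)).
    pose proof (pm_nonneg _ (sys_mu SX) _ (HPhi B hB)). nra. }
  destruct (Hyp nu' Hnu) as [UY [hUY [hUYm hUYb]]].
  set (cnt1 := cntK SX K (- Z.of_nat N) N). set (cnt2 := cntK SX K 0 N).
  set (G := fun x => (cnt1 x < m)%nat /\ (cnt2 x < m)%nat /\ ~ Zbad SX Zs N x).
  assert (bA : forall a j, borel (fun y => ~ K (sys_iter SX (a + Z.of_nat j) y))).
  { intros a j. apply borel_compl. apply (borel_preimage_cont _ (cont_iter SX _)); auto. }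
  assert (bc : forall a, borel (fun x => (m <= cntK SX K a N x)%nat)).
  { intro a. apply borel_cnt. intro j; apply bA. }
  assert (bG : borel G).
  { apply borel_and; [|apply borel_and].
    - apply borel_ext with (A := fun x => ~ (m <= cnt1 x)%nat); [apply borel_compl, bc| intro; lia].
    - apply borel_ext with (A := fun x => ~ (m <= cnt2 x)%nat); [apply borel_compl, bc| intro; lia].
    - apply borel_compl, borel_Zbad; auto. }
  assert (Hmk : forall a, pm (sys_mu SX) (fun x => (m <= cntK SX K a N x)%nat) <= tau / eps).
  { intro a. pose proof (markov (sys_mu SX) (fun j y => ~ K (sys_iter SX (a + Z.of_nat j) y)) N m (bA a) hm0) as H.
    assert (fsum (fun j => pm (sys_mu SX) (fun y => ~ K (sys_iter SX (a + Z.of_nat j) y))) N <= INR N * tau).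
    { apply fsum_le_const. intros k _.
      rewrite (inv_iter SX _ (fun y => ~ K y)) by (apply borel_compl; auto). auto. }
    set (P := pm (sys_mu SX) (fun x => (m <= cntK SX K a N x)%nat)) in *.
    change (INR m * P <= fsum (fun j => pm (sys_mu SX) (fun y => ~ K (sys_iter SX (a + Z.of_nat j) y))) N) in H.
    assert (0 <= P) by (apply pm_nonneg, bc).
    assert (eps * INR N * P <= INR m * P) by (apply Rmult_le_compat_r; lra).
assert (eps * INR N * P <= INR N * tau) by lra.
    apply (Rmult_le_reg_l (eps * INR N)); [nra|]. unfold Rdiv.
    replace (eps * INR N * (tau * / eps)) with (INR N * tau) by (field; lra). lra. }
  assert (HGc : pm (sys_mu SX) (fun x => ~ G x) <= 2 * (tau / eps)).
  { eapply Rle_trans with (pm (sys_mu SX) (fun x => ((m <= cnt1 x)%nat \/ (m <= cnt2 x)%nat) \/ Zbad SX Zs N x)).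
    - apply pm_mono; [apply borel_compl; auto| apply borel_or; [apply borel_or; apply bc| apply borel_Zbad; auto]|].
      intros x h. unfold G in h. destruct (le_lt_dec m (cnt1 x)); [left; left; auto|].
      destruct (le_lt_dec m (cnt2 x)); [left; right; auto|]. right; tauto.
    - eapply Rle_trans; [apply pm_sub2; [apply borel_or; apply bc| apply borel_Zbad; auto]|].
      eapply Rle_trans; [apply Rplus_le_compat_l, (null_Zbad SX Zs N HZb HZ0)|].
      eapply Rle_trans; [apply Rplus_le_compat_r, pm_sub2; apply bc|].
      pose proof (Hmk (- Z.of_nat N)%Z). pose proof (Hmk 0%Z). unfold cnt1, cnt2. lra. }
  assert (HG' : pm mu' (fun x => ~ G x) <= (kappa - kappa') / 4).
  { eapply Rle_trans; [apply Hmu'; apply borel_compl; auto|].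
    assert (alpha1 * (2 * (tau / eps)) = (kappa - kappa') / 4) by (unfold tau; field; lra).
    pose proof (pm_nonneg _ (sys_mu SX) _ (borel_compl _ bG)). nra. }
  assert (Hb : forall a x z, (a = - Z.of_nat N \/ a = 0)%Z -> ~ Zbad SX Zs N x -> ~ Zbad SX Zs N z ->
     (cntK SX K a N x < m)%nat -> (cntK SX K a N z < m)%nat ->
     dseg SX a N x z < delta1 * INR N -> dseg SY a N (Phi x) (Phi z) < delta * INR N).
  { intros a x z ha0 hx hz cx cz hdx.
    pose proof (window SX SY Phi K eta beta D he ltac:(unfold beta; lra) hD HD HK a N x z) as W.
    assert (Eq : forall w, ~ Zbad SX Zs N w -> forall k, (k < N)%nat ->
              Phi (sys_iter SX (a + Z.of_nat k) w) = sys_iter SY (a + Z.of_nat k) (Phi w)).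
    { intros w hw k hk. apply (eqv_iter SX SY Phi Zs HZ N w hw). destruct ha0; subst; lia. }
    specialize (W (Eq x hx) (Eq z hz)).
    apply lt_INR in cx. apply lt_INR in cz.
    assert (D * INR (cntK SX K a N x) <= D * (2 * eps * INR N)) by (apply Rmult_le_compat_l; lra).
    assert (D * INR (cntK SX K a N z) <= D * (2 * eps * INR N)) by (apply Rmult_le_compat_l; lra).
    assert (E1 : D * (2 * eps * INR N) = delta / 8 * INR N) by (unfold eps; field; lra).
    assert (D / eta * dseg SX a N x z < D / eta * (delta1 * INR N)).
    { apply Rmult_lt_compat_l; auto. apply Rdiv_lt_0_compat; auto. }
    assert (D / eta * (delta1 * INR N) <= delta / 4 * INR N).
    { replace (D / eta * (delta1 * INR N)) with ((D / eta * delta1) * INR N) by ring.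
      apply Rmult_le_compat_r; [lra|].
      apply Rle_trans with (D / eta * (eta * delta / (4 * D))).
      - apply Rmult_le_compat_l; auto. apply Rlt_le, Rdiv_lt_0_compat; auto.
      - right; field; lra. }
    unfold beta in W. assert (0 < delta * INR N) by (apply Rmult_lt_0_compat; lra). nra. }
  exists (fun x => UY (Phi x) /\ G x). split; [|split].
  - apply borel_and; auto; apply HPhi; auto.
  - assert (pm mu' (fun x => UY (Phi x)) <= pm mu' (fun x => UY (Phi x) /\ G x) + pm mu' (fun x => ~ G x)).
    { eapply Rle_trans; [|apply pm_sub2].
      - apply pm_mono; [apply HPhi; auto| apply borel_or; [apply borel_and; auto; apply HPhi; auto| apply borel_compl; auto]|].
        intros x h. destruct (classic (G x)); [left|right]; auto.
      - apply borel_and; auto; apply HPhi; auto.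
      - apply borel_compl; auto. }
    simpl in hUYm. unfold Rge in *. lra.
  - intros F HF hlen hgt. apply (hUYb (map Phi F)).
    + intros y hy. apply in_map_iff in hy. destruct hy as [x [e hx]]. subst. apply HF; auto.
    + rewrite length_map; auto.
    + simpl. unfold Rgt in *. eapply Rlt_le_trans; [exact hgt|].
      apply pm_mono.
      * apply borel_ext with (A := fun y => (UY (Phi y) /\ G y) /\ exists z, ((UY (Phi z) /\ G z) /\
                exists x, In x F /\ dseg SX (- Z.of_nat N) N x z < delta1 * INR N) /\ dseg SX 0 N z y < delta1 * INR N).
        -- apply borel_nbhd. apply borel_and; auto; apply HPhi; auto.
        -- intro y; unfold bicov_set; split.
           ++ intros [h1 [z [[h2 h3] h4]]]. split; auto. exists z; tauto.
           ++ intros [h1 [z [h2 [h3 h4]]]]. split; auto. exists z; tauto.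
      * apply HPhi. apply borel_ext with (A := fun y => UY y /\ exists z, (UY z /\
                exists x, In x (map Phi F) /\ dseg SY (- Z.of_nat N) N x z < delta * INR N) /\ dseg SY 0 N z y < delta * INR N).
        -- apply borel_nbhd; auto.
        -- intro y; unfold bicov_set; split.
           ++ intros [h1 [z [[h2 h3] h4]]]. split; auto. exists z; tauto.
           ++ intros [h1 [z [h2 [h3 h4]]]]. split; auto. exists z; tauto.
      * intros y [[hy1 hy2] [z [[hz1 hz2] [hzy [x [hxF hxz]]]]]].
        split; auto. exists (Phi z). split; auto. split.
        -- apply Hb; [right; reflexivity| exact (proj2 (proj2 hz2))| exact (proj2 (proj2 hy2))
                     | exact (proj1 (proj2 hz2))| exact (proj1 (proj2 hy2))| exact hzy].
        -- exists (Phi x). split; [apply in_map; auto|].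
           destruct (HF x hxF) as [_ hx2].
           apply Hb; [left; reflexivity| exact (proj2 (proj2 hx2))| exact (proj2 (proj2 hz2))
                     | exact (proj1 hx2)| exact (proj1 hz2)| exact hxz].
Qed.
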